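(* Let $\Lambda\in(\mathbb{R}\setminus\{0\})^n$, let $\mathcal{X}$ be as in the context and $P\in\mathrm{Lip}_{\mathcal{X}}(\mathbb{C}^n,\mathbb{C}^n)$. Then for every $a\in\mathbb{C}^n$ the limit $\langle\langle P\rangle\rangle(a)=\lim_{T\to\pm\infty}\langle\langle P\rangle\rangle^T(a)$ exists, and $\langle\langle P\rangle\rangle\in\mathrm{Lip}_{\mathcal{X}}(\mathbb{C}^n,\mathbb{C}^n)$. Moreover, for every $R>0$ the convergence is uniform in $a\in\bar B_R$, i.e. the rate of convergence depends only on $R$, $\Lambda$ and $P$.
   Context: $\mathbb{C}^n\cong\mathbb{R}^{2n}$ with Euclidean norm; $B_R=\{v:|v|<R\}$, $\bar B_R$ its closure. For a non-decreasing continuous function $\mathcal{X}:\mathbb{R}_+\to\mathbb{R}_+$, $\mathrm{Lip}_{\mathcal{X}}(\mathbb{C}^n,\mathbb{C}^n)$ is the set of continuous vector fields $f:\mathbb{C}^n\to\mathbb{C}^n$ with $\sup_{B_R}|f|\le\mathcal{X}(R)$ and $\mathrm{Lip}(f|_{B_R})\le\mathcal{X}(R)$ for all $R\ge0$. For $w\in\mathbb{R}^n$, $\Phi_w=\mathrm{diag}(e^{\mathbf{i}w_1},\dots,e^{\mathbf{i}w_n})$. For $T\ne0$, $\langle\langle P\rangle\rangle^T(a)=\frac{1}{|T|}\int_0^T\Phi_{\Lambda t}P(\Phi_{-\Lambda t}a)\,dt$ (for $T<0$, $\int_0^T$ means $\int_T^0$). *)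

(* Defs.v *)
From Stdlib Require Import Reals ClassicalEpsilon.
From mathcomp Require Import all_boot.
Set Implicit Arguments. Unset Strict Implicit. Unset Printing Implicit Defensive.
Local Open Scope R_scope.

(* A complex number z = x + i y is the pair (x, y). *)
Definition C : Type := (R * R)%type.
Definition Cn (n : nat) : Type := 'I_n -> C.

Definition vsub (n : nat) (u v : Cn n) : Cn n :=
  fun j => (fst (u j) - fst (v j), snd (u j) - snd (v j)).

Definition vnorm (n : nat) (v : Cn n) : R :=
  sqrt (\big[Rplus/0]_(j < n) ((fst (v j))^2 + (snd (v j))^2)).

(* multiplication by e^{i th} *)
Definition crot (th : R) (z : C) : C :=
  (cos th * fst z - sin th * snd z, sin th * fst z + cos th * snd z).

Definition Phi (n : nat) (w : 'I_n -> R) (a : Cn n) : Cn n :=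
  fun j => crot (w j) (a j).

(* Riemann integral \int_a^b f (value independent of the integrability proof;
   0 if f is not Riemann integrable, which never happens for continuous f). *)
Definition Rint (f : R -> R) (a b : R) : R :=
  epsilon (inhabits 0)
    (fun I => exists pr : Riemann_integrable f a b, RiemannInt pr = I).

(* (1/|T|) \int_0^T f, with \int_0^T meaning \int_T^0 for T < 0. *)
Definition avgR (f : R -> R) (T : R) : R :=
  if Rlt_dec 0 T then / T * Rint f 0 T else / (- T) * Rint f T 0.

Definition avgP (n : nat) (Lam : 'I_n -> R) (P : Cn n -> Cn n) (T : R) (a : Cn n)
  : Cn n :=
  fun j =>
    let g := fun t => crot (Lam j * t) (P (Phi (fun k => - (Lam k * t)) a) j) in
    (avgR (fun t => fst (g t)) T, avgR (fun t => snd (g t)) T).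

(* X : R_+ -> R_+ non-decreasing and continuous (only values on [0,oo) matter). *)
Definition Xadm (X : R -> R) : Prop :=
  (forall r, 0 <= r -> 0 <= X r) /\
  (forall r s, 0 <= r -> r <= s -> X r <= X s) /\
  (forall r, 0 <= r -> forall eps, 0 < eps -> exists delta, 0 < delta /\
     forall s, 0 <= s -> Rabs (s - r) < delta -> Rabs (X s - X r) < eps).

Definition LipX (n : nat) (X : R -> R) (f : Cn n -> Cn n) : Prop :=
  (forall x eps, 0 < eps -> exists delta, 0 < delta /\
     forall y, vnorm (vsub y x) < delta -> vnorm (vsub (f y) (f x)) < eps) /\
  (forall r, 0 <= r ->
     (forall v, vnorm v < r -> vnorm (f v) <= X r) /\
     (forall u v, vnorm u < r -> vnorm v < r ->
        vnorm (vsub (f u) (f v)) <= X r * vnorm (vsub u v))).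

(* Main.v *)
Require Import Defs.
From Stdlib Require Import Reals Lra Psatz ClassicalEpsilon FunctionalExtensionality.
From mathcomp Require Import all_boot.
From Coquelicot Require Import Rcomplements Hierarchy RInt RInt_analysis Continuity.
Set Implicit Arguments. Unset Strict Implicit.
Local Open Scope R_scope.

Lemma sumS_plus (I:Type) (r : seq I) (F G : I -> R) : \big[Rplus/0]_(j <- r) (F j + G j) = \big[Rplus/0]_(j <- r) F j + \big[Rplus/0]_(j <- r) G j.
Proof. elim: r => [|i r IH]; rewrite ?big_nil ?big_cons. lra. rewrite IH. lra. Qed.
Lemma sumS_scal (I:Type) (r : seq I) (F : I -> R) c : \big[Rplus/0]_(j <- r) (c * F j) = c * \big[Rplus/0]_(j <- r) F j.
Proof. elim: r => [|i r IH]; rewrite ?big_nil ?big_cons. lra. rewrite IH. lra. Qed.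
Lemma sumS_ext (I:Type) (r : seq I) (F G : I -> R) : (forall i, F i = G i) -> \big[Rplus/0]_(j <- r) F j = \big[Rplus/0]_(j <- r) G j.
Proof. move=> H; elim: r => [|i r IH]; rewrite ?big_nil ?big_cons. lra. rewrite IH H. lra. Qed.
Lemma sumS_le (I:Type) (r : seq I) (F G : I -> R) : (forall i, F i <= G i) -> \big[Rplus/0]_(j <- r) F j <= \big[Rplus/0]_(j <- r) G j.
Proof. move=> H; elim: r => [|i r IH]; rewrite ?big_nil ?big_cons. lra. have := H i. lra. Qed.
Lemma sumS_ge0 (I:Type) (r : seq I) (F : I -> R) : (forall i, 0 <= F i) -> 0 <= \big[Rplus/0]_(j <- r) F j.
Proof. move=> H; elim: r => [|i r IH]; rewrite ?big_nil ?big_cons. lra. have := H i. lra. Qed.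
Lemma sumS_term (I:eqType) (r : seq I) (F : I -> R) i : (forall i, 0 <= F i) -> i \in r -> F i <= \big[Rplus/0]_(j <- r) F j.
Proof.
move=> H; elim: r => [|k r IH]; rewrite ?big_nil ?big_cons //.
rewrite in_cons => /orP [/eqP ->|Hi].
- have := @sumS_ge0 _ r _ H. lra.
- have := IH Hi. have := H k. lra.
Qed.
Lemma sumS_sqle (I:Type) (r : seq I) (F : I -> R) : (forall i, 0 <= F i) -> \big[Rplus/0]_(j <- r) (F j * F j) <= (\big[Rplus/0]_(j <- r) F j) * (\big[Rplus/0]_(j <- r) F j).
Proof.
move=> H; elim: r => [|i r IH]; rewrite ?big_nil ?big_cons. lra.
have := @sumS_ge0 _ r _ H. have := H i. nra.
Qed.
Lemma sum_const (n : nat) c : \big[Rplus/0]_(j < n) c = INR n * c.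
Proof. rewrite big_const_ord. elim: n => [|n IH] /=. lra. rewrite IH. destruct n; simpl; lra. Qed.

Lemma sq_le_abs N x : 0 <= N -> x * x <= N * N -> Rabs x <= N.
Proof. move=> H1 H2. destruct (Rcase_abs x) as [h|h]; [rewrite Rabs_left // | rewrite Rabs_right //]; nra. Qed.
Lemma sq_le N x : 0 <= N -> 0 <= x -> x * x <= N * N -> x <= N.
Proof. move=> *; nra. Qed.
Lemma abs_le_sq x e : Rabs x <= e -> x * x <= e * e.
Proof. move=> H. destruct (Rcase_abs x) as [h|h]; [rewrite Rabs_left in H | rewrite Rabs_right in H]; nra. Qed.

Definition dot (n:nat) (u v : Cn n) := \big[Rplus/0]_(j < n) (fst (u j) * fst (v j) + snd (u j) * snd (v j)).

Lemma vnorm_ge0 n (v : Cn n) : 0 <= vnorm v.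
Proof. apply sqrt_pos. Qed.
Lemma dot_ge0 n (v : Cn n) : 0 <= dot v v.
Proof. apply sumS_ge0 => i. nra. Qed.
Lemma vnorm_sq n (v : Cn n) : vnorm v * vnorm v = dot v v.
Proof.
rewrite /vnorm (sumS_ext _ (G := fun j => fst (v j) * fst (v j) + snd (v j) * snd (v j))).
  by rewrite sqrt_sqrt //; apply dot_ge0.
move=> i /=; ring.
Qed.
Lemma vnorm_ext n (u v : Cn n) : (forall j, fst (u j) = fst (v j) /\ snd (u j) = snd (v j)) -> vnorm u = vnorm v.
Proof. move=> H. rewrite /vnorm; f_equal; apply sumS_ext => i; by case: (H i) => -> ->. Qed.
Lemma vnorm_of_sq n (v : Cn n) N : 0 <= N -> N * N = dot v v -> vnorm v = N.
Proof. move=> H1 H2. rewrite /vnorm (sumS_ext _ (G := fun j => fst (v j) * fst (v j) + snd (v j) * snd (v j))).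
  by rewrite -/(dot v v) -H2 sqrt_square.
move=> i /=; ring. Qed.

Lemma comp_le n (v : Cn n) j : Rabs (fst (v j)) <= vnorm v /\ Rabs (snd (v j)) <= vnorm v.
Proof.
have H := vnorm_sq v. have H0 := vnorm_ge0 v.
have Ht : fst (v j) * fst (v j) + snd (v j) * snd (v j) <= dot v v.
  apply (sumS_term (F := fun j => fst (v j) * fst (v j) + snd (v j) * snd (v j))).
  move=> i; nra. apply mem_index_enum.
split; apply sq_le_abs => //; nra.
Qed.

Lemma vnorm_le_sum n (v : Cn n) : vnorm v <= \big[Rplus/0]_(j < n) (Rabs (fst (v j)) + Rabs (snd (v j))).
Proof.
rewrite -[vnorm v]Rabs_right; last by apply Rle_ge, vnorm_ge0.
apply sq_le_abs. apply sumS_ge0 => i. have := Rabs_pos (fst (v i)). have := Rabs_pos (snd (v i)). lra.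
rewrite vnorm_sq. apply: Rle_trans; last first. apply sumS_sqle => i.
 have := Rabs_pos (fst (v i)). have := Rabs_pos (snd (v i)). lra.
apply sumS_le => i.
have := Rabs_pos (fst (v i)). have := Rabs_pos (snd (v i)).
have h1 := Rsqr_abs (fst (v i)). have h2 := Rsqr_abs (snd (v i)). rewrite /Rsqr in h1 h2. nra.
Qed.

Lemma CS n (u v : Cn n) : dot u v <= vnorm u * vnorm v.
Proof.
set A := dot u u. set B := dot u v. set C := dot v v.
have Hq : forall l, 0 <= A + 2 * l * B + l * l * C.
  move=> l.
  have -> : A + 2 * l * B + l * l * C = \big[Rplus/0]_(j < n) ((fst (u j) + l * fst (v j)) * (fst (u j) + l * fst (v j)) + (snd (u j) + l * snd (v j)) * (snd (u j) + l * snd (v j))).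
    rewrite /A /B /C /dot -!sumS_scal -!sumS_plus. apply sumS_ext => i. ring.
  apply sumS_ge0 => i. apply Rplus_le_le_0_compat; apply Rle_0_sqr.
have HB : B * B <= A * C.
  have hA : 0 <= A by apply dot_ge0. have hC : 0 <= C by apply dot_ge0.
  destruct (Req_dec C 0) as [h0|h0].
  - destruct (Req_dec B 0) as [b0|b0]. rewrite b0 h0; lra.
    have := Hq (- (A + 1) / (2 * B)). rewrite h0.
    have -> : A + 2 * (- (A + 1) / (2 * B)) * B + - (A + 1) / (2 * B) * (- (A + 1) / (2 * B)) * 0 = -1 by field.
    lra.
  - have := Hq (- B / C).
    have -> : A + 2 * (- B / C) * B + - B / C * (- B / C) * C = (A * C - B * B) / C by field.
    move=> h. have hc : 0 < C by lra.
    have : 0 <= (A * C - B * B) / C * C by nra.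
    have -> : (A * C - B * B) / C * C = A * C - B * B by field. lra.
have h1 := vnorm_sq u. have h2 := vnorm_sq v. have h3 := vnorm_ge0 u. have h4 := vnorm_ge0 v.
rewrite -/A in h1. rewrite -/C in h2.
destruct (Rle_dec B (vnorm u * vnorm v)) as [h|h] => //.
have h5 : 0 <= vnorm u * vnorm v by nra.
have : vnorm u * vnorm v * (vnorm u * vnorm v) < B * B.
  apply Rmult_le_0_lt_compat; lra.
have -> : vnorm u * vnorm v * (vnorm u * vnorm v) = A * C by rewrite -h1 -h2; ring.
lra.
Qed.

Lemma vtri n (x y z : Cn n) : vnorm (vsub x z) <= vnorm (vsub x y) + vnorm (vsub y z).
Proof.
set u := vsub x y. set v := vsub y z.
have E : dot (vsub x z) (vsub x z) = dot u u + 2 * dot u v + dot v v.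
  rewrite /dot -!sumS_scal -!sumS_plus. apply sumS_ext => i /=. ring.
have := CS u v. have := vnorm_sq u. have := vnorm_sq v. have := vnorm_sq (vsub x z).
have := vnorm_ge0 u. have := vnorm_ge0 v. have := vnorm_ge0 (vsub x z). nra.
Qed.

Lemma vsym n (u v : Cn n) : vnorm (vsub u v) = vnorm (vsub v u).
Proof. rewrite /vnorm; f_equal; apply sumS_ext => i /=. ring. Qed.

Definition v0 n : Cn n := fun _ => (0, 0).
Lemma vsub0 n (v : Cn n) : vnorm (vsub v (@v0 n)) = vnorm v.
Proof. apply vnorm_ext => j /=; split; ring. Qed.

Lemma vscal_norm n (v : Cn n) c : vnorm (fun j => (c * fst (v j), c * snd (v j))) = Rabs c * vnorm v.
Proof.
apply vnorm_of_sq. apply Rmult_le_pos. apply Rabs_pos. apply vnorm_ge0.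
have -> : Rabs c * vnorm v * (Rabs c * vnorm v) = (Rabs c * Rabs c) * (vnorm v * vnorm v) by ring.
rewrite vnorm_sq -Rabs_mult Rabs_right; last by nra.
rewrite /dot -sumS_scal. apply sumS_ext => i /=. ring.
Qed.

Lemma cs1 t : sin t * sin t + cos t * cos t = 1.
Proof. have := sin2_cos2 t. rewrite /Rsqr. lra. Qed.

Lemma Phi_norm n w (v : Cn n) : vnorm (Phi w v) = vnorm v.
Proof.
rewrite /vnorm; f_equal; apply sumS_ext => i /=.
have h := cs1 (w i).
transitivity ((sin (w i) * sin (w i) + cos (w i) * cos (w i)) * (fst (v i) ^ 2 + snd (v i) ^ 2)); [ring | rewrite h; ring].
Qed.

Lemma Phi_sub n w (u v : Cn n) : vnorm (vsub (Phi w u) (Phi w v)) = vnorm (vsub u v).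
Proof.
rewrite -(Phi_norm w (vsub u v)). apply vnorm_ext => j /=. split; ring.
Qed.

Lemma Phi_comp n w w' (v : Cn n) : Phi w (Phi w' v) = Phi (fun k => w k + w' k) v.
Proof.
apply functional_extensionality => j. rewrite /Phi /crot /= cos_plus sin_plus. f_equal; ring.
Qed.

Lemma Phi_ext n w w' (v : Cn n) : (forall k, w k = w' k) -> Phi w v = Phi w' v.
Proof. move=> H. apply functional_extensionality => j. by rewrite /Phi H. Qed.

Lemma sin_abs x : Rabs (sin x) <= Rabs x.
Proof.
have key : forall y, 0 < y -> Rabs (sin y) <= y.
  move=> y hy. have h1 := sin_lt_x y hy. have hb := SIN_bound y. have hp := PI2_1.
  apply Rabs_le. split; last lra.
  destruct (Rle_lt_dec y PI). have := sin_ge_0 y (Rlt_le _ _ hy) r. lra. lra.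
destruct (Rtotal_order x 0) as [h|[h|h]].
- rewrite -(Ropp_involutive x) sin_neg Rabs_Ropp Rabs_Ropp (Rabs_right (- x)); last lra. apply key. lra.
- subst. rewrite sin_0 Rabs_R0. lra.
- rewrite (Rabs_right x); last lra. by apply key.
Qed.

Lemma cos_bnd x : 2 - 2 * cos x <= x * x.
Proof.
have -> : x = 2 * (x / 2) by field.
rewrite cos_2a_sin. have := abs_le_sq (sin_abs (x/2)).
have -> : Rabs (x / 2) * Rabs (x / 2) = (x/2) * (x/2).
  rewrite -Rabs_mult Rabs_right //. nra.
nra.
Qed.

Lemma rot_close2 n w (v : Cn n) e : 0 <= e -> (forall k, 2 - 2 * cos (w k) <= e * e) ->
  vnorm (vsub (Phi w v) v) <= e * vnorm v.
Proof.
move=> he H. apply sq_le. have := vnorm_ge0 v. nra. apply vnorm_ge0.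
rewrite vnorm_sq.
have -> : e * vnorm v * (e * vnorm v) = (e * e) * (vnorm v * vnorm v) by ring.
rewrite vnorm_sq /dot -sumS_scal. apply sumS_le => i /=.
have h := cs1 (w i). have hk := H i.
have -> : (cos (w i) * fst (v i) - sin (w i) * snd (v i) - fst (v i)) *
  (cos (w i) * fst (v i) - sin (w i) * snd (v i) - fst (v i)) +
  (sin (w i) * fst (v i) + cos (w i) * snd (v i) - snd (v i)) *
  (sin (w i) * fst (v i) + cos (w i) * snd (v i) - snd (v i))
  = ((sin (w i) * sin (w i) + cos (w i) * cos (w i)) + 1 - 2 * cos (w i)) * (fst (v i) * fst (v i) + snd (v i) * snd (v i)) by ring.
rewrite h. nra.
Qed.

Lemma rot_close n w (v : Cn n) e : 0 <= e -> (forall k, Rabs (w k) <= e) ->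
  vnorm (vsub (Phi w v) v) <= e * vnorm v.
Proof.
move=> he H. apply rot_close2 => // k. apply: Rle_trans (cos_bnd _) _. by apply abs_le_sq.
Qed.

Definition contR (h : R -> R) := forall t, continuous h t.

Lemma exR h a b : contR h -> ex_RInt h a b.
Proof. move=> H. apply: (ex_RInt_continuous (V := R_CompleteNormedModule)) => z _. apply H. Qed.

Lemma Rint_RInt (h : R -> R) a b : ex_RInt h a b -> Rint h a b = RInt h a b.
Proof.
move=> H. have pr := ex_RInt_Reals_0 _ _ _ H.
have E : exists I, exists pr : Riemann_integrable h a b, RiemannInt pr = I by exists (RiemannInt pr), pr.
have [pr' Hp] := epsilon_spec (inhabits 0) _ E.
rewrite /Rint -Hp. by rewrite (RInt_Reals _ _ _ pr').
Qed.

Lemma contR_sub f g : contR f -> contR g -> contR (fun t => f t - g t).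
Proof. move=> Hf Hg t. apply: (continuous_minus f g) ; [apply Hf|apply Hg]. Qed.
Lemma contR_shift f c : contR f -> contR (fun t => f (t + c)).
Proof. move=> Hf t. apply: (continuous_comp (fun t => t + c) f).
  apply: (continuous_plus (fun t => t) (fun _ => c)). apply continuous_id. apply continuous_const.
  apply Hf. Qed.

Lemma RInt_absle h M a b : contR h -> (forall t, Rabs (h t) <= M) -> Rabs (RInt h a b) <= M * Rabs (b - a).
Proof.
move=> Hc Hb. destruct (Rle_dec a b) as [hab|hab].
- rewrite (Rabs_right (b - a)); last lra. rewrite Rmult_comm.
  apply: (abs_RInt_le_const h a b M hab). by apply exR. move=> t _; apply Hb.
- rewrite -(opp_RInt_swap h b a (exR b a Hc)). 
  change (Rabs (- RInt h b a) <= M * Rabs (b - a)). rewrite Rabs_Ropp.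
  rewrite (Rabs_left (b - a)); last lra. rewrite Rmult_comm.
  have -> : - (b - a) = a - b by ring.
  apply: (abs_RInt_le_const h b a M). lra. by apply exR. move=> t _; apply Hb.
Qed.

Lemma Chasles h a b c : contR h -> RInt h a b + RInt h b c = RInt h a c.
Proof. move=> H. exact: (RInt_Chasles h a b c (exR a b H) (exR b c H)). Qed.

Lemma RInt_shift h tau T : contR h -> RInt h tau (tau + T) = RInt (fun y => h (y + tau)) 0 T.
Proof.
move=> H. have := RInt_comp_lin h 1 tau 0 T (exR _ _ H).
have -> : 1 * 0 + tau = tau by ring. have -> : 1 * T + tau = tau + T by ring.
move=> <-. apply RInt_ext => x _. change (1 * h (1 * x + tau) = h (x + tau)). rewrite Rmult_1_l. f_equal; ring.
Qed.

Lemma RInt_minusR f g a b : contR f -> contR g -> RInt (fun t => f t - g t) a b = RInt f a b - RInt g a b.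
Proof. move=> Hf Hg. exact: (RInt_minus f g a b (exR a b Hf) (exR a b Hg)). Qed.

Definition APh (h : R -> R) L eta := forall s, exists tau, Rabs (tau - s) <= L /\ forall t, Rabs (h (t + tau) - h t) <= eta.
Definition AA (h : R -> R) T := RInt h 0 T.

Lemma S1 h M L eta T s : contR h -> (forall t, Rabs (h t) <= M) -> APh h L eta -> 0 <= T ->
  Rabs (RInt h s (s + T) - AA h T) <= 2 * L * M + eta * T.
Proof.
move=> Hc Hb Hap HT. have [tau [Ht Hh]] := Hap s.
have HM : 0 <= M by have := Hb 0; have := Rabs_pos (h 0); lra.
rewrite -(Chasles s tau (s + T) Hc) -(Chasles tau (tau + T) (s + T) Hc) RInt_shift //.
have E : RInt (fun y => h (y + tau)) 0 T - AA h T = RInt (fun y => h (y + tau) - h y) 0 T.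
  rewrite RInt_minusR //. by apply contR_shift.
have B1 : Rabs (RInt (fun y => h (y + tau) - h y) 0 T) <= eta * T.
  have -> : eta * T = (T - 0) * eta by ring.
  apply: (abs_RInt_le_const (fun y => h (y + tau) - h y) 0 T eta HT).
  apply exR, contR_sub => //. by apply contR_shift.
  move=> t _; apply Hh.
have B2 : Rabs (RInt h s tau) <= M * L.
  apply: Rle_trans (RInt_absle s tau Hc Hb) _. by apply Rmult_le_compat_l.
have B3 : Rabs (RInt h (tau + T) (s + T)) <= M * L.
  apply: Rle_trans (RInt_absle (tau + T) (s + T) Hc Hb) _. apply Rmult_le_compat_l => //.
  have -> : s + T - (tau + T) = - (tau - s) by ring. by rewrite Rabs_Ropp.
set a1 := RInt h s tau in B2 *. set a2 := RInt h (tau + T) (s + T) in B3 *.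
set a3 := RInt (fun y => h (y + tau)) 0 T in E *.
have -> : a1 + (a3 + a2) - AA h T = a1 + a2 + (a3 - AA h T) by ring.
rewrite E. apply: Rle_trans (Rabs_triang _ _) _. apply: Rle_trans (Rplus_le_compat_r _ _ _ (Rabs_triang _ _)) _.
lra.
Qed.

Lemma S2 h M L eta T : contR h -> (forall t, Rabs (h t) <= M) -> APh h L eta -> 0 < T ->
  forall N : nat, Rabs (AA h (INR N * T) - INR N * AA h T) <= INR N * (2 * L * M + eta * T).
Proof.
move=> Hc Hb Hap HT. elim => [|N IH].
- rewrite /AA /= Rmult_0_l RInt_point. change (Rabs (0 - 0 * RInt h 0 T) <= 0 * (2 * L * M + eta * T)).
  rewrite Rmult_0_l Rminus_0_r Rabs_R0. lra.
- rewrite S_INR.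
  have E : AA h ((INR N + 1) * T) = AA h (INR N * T) + RInt h (INR N * T) (INR N * T + T).
    rewrite /AA Chasles //. f_equal; ring.
  rewrite E.
  have := S1 (INR N * T) Hc Hb Hap (Rlt_le _ _ HT).
  have -> : AA h (INR N * T) + RInt h (INR N * T) (INR N * T + T) - (INR N + 1) * AA h T
     = (AA h (INR N * T) - INR N * AA h T) + (RInt h (INR N * T) (INR N * T + T) - AA h T) by ring.
  move=> H1. apply: Rle_trans (Rabs_triang _ _) _. lra.
Qed.

Lemma div_le_pos x y c : 0 < y -> Rabs x <= c -> Rabs (x / y) <= c / y.
Proof.
move=> Hy H. rewrite /Rdiv Rabs_mult (Rabs_right (/ y)); last by apply Rle_ge, Rlt_le, Rinv_0_lt_compat.
apply Rmult_le_compat_r => //. by apply Rlt_le, Rinv_0_lt_compat.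
Qed.

Lemma S3 h M L eta T T' : contR h -> (forall t, Rabs (h t) <= M) -> APh h L eta -> 0 < T -> T <= T' ->
  Rabs (AA h T' / T' - AA h T / T) <= 2 * M * T / T' + 2 * L * M / T + eta.
Proof.
move=> Hc Hb Hap HT HT'.
have HM : 0 <= M by have := Hb 0; have := Rabs_pos (h 0); lra.
have Hq : 0 <= T' / T by apply Rlt_le, Rdiv_lt_0_compat; lra.
have [N [HN1 HN2]] := nfloor_ex _ Hq.
have HN0 : 1 <= INR N.
  destruct N as [|N]. simpl in HN2. have : 1 <= T' / T. apply (Rmult_le_reg_r T) => //. rewrite Rmult_1_l /Rdiv Rmult_assoc Rinv_l; lra. lra.
  rewrite S_INR. have := pos_INR N. lra.
set NT := INR N * T.
have HNT0 : 0 < NT by rewrite /NT; nra.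
have HNT1 : NT <= T'.
  rewrite /NT. have := Rmult_le_compat_r T _ _ (Rlt_le _ _ HT) HN1. rewrite /Rdiv Rmult_assoc Rinv_l; lra.
have HNT2 : T' < NT + T.
  rewrite /NT. have := Rmult_lt_compat_r T _ _ HT HN2. rewrite /Rdiv Rmult_assoc Rinv_l; lra.
set a1 := AA h T'. set a0 := AA h NT. set aT := AA h T.
set d1 := RInt h NT T'.
have Ed : a1 = a0 + d1 by rewrite /a1 /a0 /d1 /AA Chasles.
have Bd : Rabs d1 <= M * T.
  apply: Rle_trans (RInt_absle NT T' Hc Hb) _. apply Rmult_le_compat_l => //.
  rewrite Rabs_right; lra.
have B0 : Rabs a0 <= M * NT.
  apply: Rle_trans (RInt_absle 0 NT Hc Hb) _. rewrite Rminus_0_r Rabs_right; lra.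
have B2 : Rabs (a0 - INR N * aT) <= INR N * (2 * L * M + eta * T) by apply S2.
have E : a1 / T' - aT / T = d1 / T' + (a0 * (NT - T')) / (T' * NT) + (a0 - INR N * aT) / NT.
  rewrite Ed /NT. field. lra.
rewrite E.
apply: Rle_trans (Rabs_triang _ _) _. apply: Rle_trans (Rplus_le_compat_r _ _ _ (Rabs_triang _ _)) _.
have C1 : Rabs (d1 / T') <= M * T / T' by apply div_le_pos => //; lra.
have C2 : Rabs (a0 * (NT - T') / (T' * NT)) <= (M * NT * T) / (T' * NT).
  apply div_le_pos. nra. rewrite Rabs_mult. apply Rmult_le_compat => //; try apply Rabs_pos.
  rewrite Rabs_left1; lra.
have C3 : Rabs ((a0 - INR N * aT) / NT) <= INR N * (2 * L * M + eta * T) / NT by apply div_le_pos.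
rewrite (_ : M * NT * T / (T' * NT) = M * T / T') in C2; last by field; lra.
rewrite (_ : INR N * (2 * L * M + eta * T) / NT = 2 * L * M / T + eta) in C3; last by rewrite /NT; field; lra.
have -> : 2 * M * T / T' = M * T / T' + M * T / T' by field; lra.
lra.
Qed.

Definition Un (h : R -> R) (N : nat) := AA h (INR N + 1) / (INR N + 1).
Definition meanR (h : R -> R) := epsilon (inhabits 0) (fun l => Un_cv (Un h) l).

Lemma le_div x y c : 0 < y -> x <= c * y -> x / y <= c.
Proof. move=> Hy H. apply (Rmult_le_reg_r y) => //. rewrite /Rdiv Rmult_assoc Rinv_l; lra. Qed.

Lemma S4 h M : contR h -> (forall t, Rabs (h t) <= M) ->
  (forall eta, 0 < eta -> exists L, 0 <= L /\ APh h L eta) -> Un_cv (Un h) (meanR h).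
Proof.
move=> Hc Hb Hap.
have HM : 0 <= M by have := Hb 0; have := Rabs_pos (h 0); lra.
rewrite /meanR; apply epsilon_spec.
have Cc : Cauchy_crit (Un h).
  move=> eps Heps. set eta := eps / 8. have Heta : 0 < eta by rewrite /eta; lra.
  have [L [HL Hapl]] := Hap eta Heta.
  set T1 := 2 * L * M / eta + 1.
  have HT1 : 0 < T1. rewrite /T1. have : 0 <= 2 * L * M / eta. apply Rmult_le_pos. nra. apply Rlt_le, Rinv_0_lt_compat; lra. lra.
  set T2 := T1 * (2 * M / eta + 1).
  have H2M : 0 <= 2 * M / eta by apply Rmult_le_pos; [lra|apply Rlt_le, Rinv_0_lt_compat; lra].
  have HT12 : T1 <= T2 by rewrite /T2; nra.
  have key : forall T', T2 <= T' -> Rabs (AA h T' / T' - AA h T1 / T1) <= 3 * eta.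
    move=> T' HT'. have := S3 Hc Hb Hapl HT1 (Rle_trans _ _ _ HT12 HT').
    have X1 : 2 * M * T1 / T' <= eta.
      apply le_div. lra.
      have : T1 * (2 * M + eta) <= eta * T'.
        have -> : T1 * (2 * M + eta) = eta * T2 by rewrite /T2; field; lra.
        apply Rmult_le_compat_l; lra.
      nra.
    have X2 : 2 * L * M / T1 <= eta.
      apply le_div => //. have -> : eta * T1 = 2 * L * M + eta by rewrite /T1; field; lra. lra.
    lra.
  have HT2 : 0 <= T2 by lra.
  have [N0 [_ HN0]] := nfloor_ex _ HT2.
  exists N0 => n m Hn Hm.
  have Hn' : T2 <= INR n + 1 by have := le_INR _ _ Hn; lra.
  have Hm' : T2 <= INR m + 1 by have := le_INR _ _ Hm; lra.
  have K1 := key _ Hn'. have K2 := key _ Hm'.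
  rewrite /Rdist /Un.
  set x := AA h (INR n + 1) / (INR n + 1) in K1 *. set y := AA h (INR m + 1) / (INR m + 1) in K2 *.
  set z := AA h T1 / T1 in K1 K2.
  have -> : x - y = (x - z) + - (y - z) by ring.
  apply: Rle_lt_trans (Rabs_triang _ _) _. rewrite Rabs_Ropp. rewrite /eta in K1 K2. lra.
have [l Hl] := Rcomplete.R_complete _ Cc. by exists l.
Qed.

Lemma S5 h M L eta l : contR h -> (forall t, Rabs (h t) <= M) -> APh h L eta -> Un_cv (Un h) l ->
  forall T, 0 < T -> Rabs (AA h T / T - l) <= 2 * L * M / T + eta.
Proof.
move=> Hc Hb Hap Hl T HT.
have HM : 0 <= M by have := Hb 0; have := Rabs_pos (h 0); lra.
apply Rle_plus_epsilon => e He.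
have [N1 HN1] := Hl (e / 2) ltac:(lra).
have Hq : 0 <= 4 * M * T / e + T. have : 0 <= 4 * M * T / e. apply Rmult_le_pos. nra. apply Rlt_le, Rinv_0_lt_compat; lra. lra.
have [N2 [_ HN2]] := nfloor_ex _ Hq.
set n := Nat.max N1 N2.
have Hn1 : (n >= N1)%coq_nat by apply Nat.le_max_l.
have Hn2 : INR N2 <= INR n by apply le_INR, Nat.le_max_r.
set T' := INR n + 1.
have HT' : T <= T'.
  have : 0 <= 4 * M * T / e. apply Rmult_le_pos. nra. apply Rlt_le, Rinv_0_lt_compat; lra.
  rewrite /T'. lra.
have H3 := S3 Hc Hb Hap HT HT'.
have H4 := HN1 n Hn1. rewrite /Rdist /Un -/T' in H4.
have X1 : 2 * M * T / T' <= e / 2.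
  apply le_div. lra.
  have : 4 * M * T / e * e = 4 * M * T by field; lra.
  have : 4 * M * T / e <= T' by rewrite /T'; lra.
  nra.
set x := AA h T' / T' in H3 H4. set z := AA h T / T in H3 *.
have -> : z - l = - (x - z) + (x - l) by ring.
apply: Rle_trans (Rabs_triang _ _) _. rewrite Rabs_Ropp. lra.
Qed.

Lemma ST h M L eta l : contR h -> (forall t, Rabs (h t) <= M) -> APh h L eta -> Un_cv (Un h) l ->
  0 <= L -> 0 <= eta ->
  forall T, T <> 0 -> Rabs (avgR h T - l) <= 4 * L * M / Rabs T + 2 * eta.
Proof.
move=> Hc Hb Hap Hl HL He T HT.
have HM : 0 <= M by have := Hb 0; have := Rabs_pos (h 0); lra.
rewrite /avgR. case: (Rlt_dec 0 T) => HT0.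
- rewrite /= Rint_RInt; last by apply exR.
  rewrite (Rabs_right T); last lra.
  rewrite (_ : / T * RInt h 0 T = AA h T / T); last by rewrite /AA /Rdiv Rmult_comm.
  have := S5 Hc Hb Hap Hl HT0.
  have : 0 <= 2 * L * M / T by apply Rmult_le_pos; [nra|apply Rlt_le, Rinv_0_lt_compat; lra].
  have -> : 4 * L * M / T = 2 * (2 * L * M / T) by field; lra.
  lra.
- have HT1 : 0 < - T by lra.
  rewrite /= Rint_RInt; last by apply exR.
  rewrite (Rabs_left T); last lra.
  have H1 := S5 Hc Hb Hap Hl HT1.
  have H2 := S1 T Hc Hb Hap (Rlt_le _ _ HT1). rewrite (_ : T + - T = 0) in H2; last ring.
  have H3 := div_le_pos HT1 H2.
  rewrite (_ : (RInt h T 0 - AA h (- T)) / - T = / - T * RInt h T 0 - AA h (-T) / - T) in H3; last by field; lra.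
  rewrite (_ : (2 * L * M + eta * - T) / - T = 2 * L * M / - T + eta) in H3; last by field; lra.
  rewrite (_ : 4 * L * M / - T = 2 * L * M / - T + 2 * L * M / - T); last by field; lra.
  set x := / - T * RInt h T 0 in H3 *. set z := AA h (- T) / - T in H1 H3.
  have -> : x - l = (x - z) + (z - l) by ring.
  apply: Rle_trans (Rabs_triang _ _) _. lra.
Qed.

Lemma net (I : eqType) (F : I -> R -> R) d (r : seq I) : 0 < d -> (forall i s, Rabs (F i s) <= 1) ->
  forall A : R -> Prop, exists L, 0 <= L /\ forall s, A s -> exists s', A s' /\ Rabs s' <= L /\
     forall j, j \in r -> Rabs (F j s - F j s') <= d.
Proof.
move=> Hd HF. elim: r => [|i r IH] A.
- case: (classic (exists s0, A s0)) => [[s0 H0]|Hn].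
  + exists (Rabs s0); split. apply Rabs_pos. move=> s _. exists s0. split=>//. split. lra. by move=> ?; rewrite in_nil.
  + exists 0. split. lra. move=> s Hs. exfalso; apply Hn; by exists s.
- set f := F i.
  set Ak := fun (k:nat) s => A s /\ INR k * d <= f s + 1 < (INR k + 1) * d.
  have Hm : forall m : nat, exists L, 0 <= L /\ forall k, (k < m)%N -> forall s, Ak k s -> exists s', Ak k s' /\ Rabs s' <= L /\ forall j, j \in r -> Rabs (F j s - F j s') <= d.
    elim => [|m IHm]. exists 0; split; [lra| by []].
    have [L1 [HL1 H1]] := IHm. have [L2 [HL2 H2]] := IH (Ak m).
    exists (Rmax L1 L2). split. apply: Rle_trans HL1 (Rmax_l _ _).
    move=> k; rewrite ltnS leq_eqVlt => /orP [/eqP ->| Hk] s Hs.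
    + have [s' [? [? ?]]] := H2 s Hs. exists s'; split=>//; split=>//. apply: Rle_trans (Rmax_r _ _). done.
    + have [s' [? [? ?]]] := H1 k Hk s Hs. exists s'; repeat split=>//. apply: Rle_trans (Rmax_l _ _). done.
  have Hq : 0 <= 2 / d by apply Rmult_le_pos; [lra|apply Rlt_le, Rinv_0_lt_compat; lra].
  have [N [_ HN]] := nfloor_ex _ Hq.
  have [L [HL HLk]] := Hm N.+1.
  exists L; split=>// s Hs.
  have Hfs := HF i s. rewrite -/f in Hfs. have [Hf1 Hf2] := proj1 (Rabs_le_between _ _) Hfs.
  have Hx : 0 <= (f s + 1) / d by apply Rmult_le_pos; [lra|apply Rlt_le, Rinv_0_lt_compat; lra].
  have [k [Hk1 Hk2]] := nfloor_ex _ Hx.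
  have Hkd : Ak k s.
    split=>//. split.
    - have := Rmult_le_compat_r d _ _ (Rlt_le _ _ Hd) Hk1. rewrite /Rdiv Rmult_assoc Rinv_l; lra.
    - have := Rmult_lt_compat_r d _ _ Hd Hk2. rewrite /Rdiv Rmult_assoc Rinv_l; lra.
  have HkN : (k < N.+1)%N.
    apply/ltP. apply INR_lt. rewrite S_INR.
    have : (f s + 1) / d <= 2 / d. apply Rmult_le_compat_r. apply Rlt_le, Rinv_0_lt_compat; lra. lra.
    lra.
  have [s' [[HA' Hi'] [Hs' Hr']]] := HLk k HkN s Hkd.
  exists s'; split=>//; split=>// j. rewrite in_cons => /orP [/eqP ->|Hj]; last by apply Hr'.
  rewrite -/f. case: Hkd => _ Hi. apply Rabs_le. lra.
Qed.

Lemma torusAP n (Lam : 'I_n -> R) d : 0 < d -> exists L, 0 <= L /\ forall s, exists tau,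
  Rabs (tau - s) <= L /\ forall j, 2 - 2 * cos (Lam j * tau) <= d * d.
Proof.
move=> Hd.
set F := fun (p : ('I_n * bool)%type) s => if p.2 then cos (Lam p.1 * s) else sin (Lam p.1 * s).
have HF : forall p s, Rabs (F p s) <= 1.
  move=> [j b] s. rewrite /F /=. case: b; apply Rabs_le. apply COS_bound. apply SIN_bound.
have [L [HL HLs]] := @net _ F (d / 2) (index_enum ('I_n * bool)%type) ltac:(lra) HF (fun _ => True).
exists L; split=>// s. have [s' [_ [Hs' Hj]]] := HLs s I.
exists (s - s'). split. have -> : s - s' - s = - s' by ring. by rewrite Rabs_Ropp.
move=> j. have Hc := Hj (j, true) (mem_index_enum _). have Hs := Hj (j, false) (mem_index_enum _).
rewrite /F /= in Hc Hs.
rewrite Rmult_minus_distr_l cos_minus.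
have h1 := cs1 (Lam j * s). have h2 := cs1 (Lam j * s').
have E : 2 - 2 * (cos (Lam j * s) * cos (Lam j * s') + sin (Lam j * s) * sin (Lam j * s'))
  = (cos (Lam j * s) - cos (Lam j * s')) * (cos (Lam j * s) - cos (Lam j * s')) + (sin (Lam j * s) - sin (Lam j * s')) * (sin (Lam j * s) - sin (Lam j * s')).
  nra.
rewrite E. have := abs_le_sq Hc. have := abs_le_sq Hs. nra.
Qed.

Definition G n (Lam : 'I_n -> R) (P : Cn n -> Cn n) (a : Cn n) t : Cn n :=
  Phi (fun k => Lam k * t) (P (Phi (fun k => - (Lam k * t)) a)).

Lemma avgP_G n (Lam : 'I_n -> R) P T a j :
  avgP Lam P T a j = (avgR (fun t => fst (G Lam P a t j)) T, avgR (fun t => snd (G Lam P a t j)) T).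
Proof. reflexivity. Qed.

Lemma G_AP n (Lam : 'I_n -> R) (P : Cn n -> Cn n) r K e tau a :
  (forall u v, vnorm u <= r -> vnorm v <= r -> vnorm (vsub (P u) (P v)) <= K * vnorm (vsub u v)) ->
  (forall u, vnorm u <= r -> vnorm (P u) <= K) -> 0 <= K -> 0 <= e ->
  (forall j, 2 - 2 * cos (Lam j * tau) <= e * e) -> vnorm a <= r ->
  forall t, vnorm (vsub (G Lam P a (t + tau)) (G Lam P a t)) <= e * K + K * (e * r).
Proof.
move=> HL HB HK He Hc Ha t.
set b := Phi (fun k => - (Lam k * t)) a.
set c := Phi (fun k => - (Lam k * tau)) b.
have Hb : vnorm b = vnorm a by rewrite /b Phi_norm.
have Hcn : vnorm c = vnorm a by rewrite /c Phi_norm.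
have E : G Lam P a (t + tau) = Phi (fun k => Lam k * t) (Phi (fun k => Lam k * tau) (P c)).
  rewrite /G /c /b !Phi_comp. congr (Phi _ (P (Phi _ a))); apply functional_extensionality => k; ring.
rewrite E /G -/b Phi_sub.
apply: Rle_trans (vtri _ (P c) _) _.
have H1 : vnorm (vsub (Phi (fun k => Lam k * tau) (P c)) (P c)) <= e * K.
  apply: Rle_trans (rot_close2 _ He Hc) _. apply Rmult_le_compat_l => //. apply HB; lra.
have H2 : vnorm (vsub (P c) (P b)) <= K * (e * r).
  apply: Rle_trans (HL _ _ _ _) _; try lra. apply Rmult_le_compat_l => //.
  apply: Rle_trans (rot_close2 _ He _) _. move=> k. rewrite cos_neg. apply Hc.
  apply Rmult_le_compat_l => //; lra.
lra.
Qed.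

Lemma cont_from_vec n (F : R -> Cn n) :
  (forall t0 eps, 0 < eps -> exists d, 0 < d /\ forall t, Rabs (t - t0) < d -> vnorm (vsub (F t) (F t0)) < eps) ->
  forall j, contR (fun t => fst (F t j)) /\ contR (fun t => snd (F t j)).
Proof.
move=> H j. split => t0; apply continuity_pt_filterlim => eps Heps;
  have [d [Hd Ht]] := H t0 eps Heps; exists d; split => // x [_ Hx];
  apply: Rle_lt_trans (Ht x Hx); rewrite /= /R_dist; have [h1 h2] := comp_le (vsub (F x) (F t0)) j; done.
Qed.

Lemma Lam_bound n (Lam : 'I_n -> R) k : Rabs (Lam k) <= \big[Rplus/0]_(j < n) Rabs (Lam j).
Proof. apply (sumS_term (F := fun j => Rabs (Lam j))). move=> i; apply Rabs_pos. apply mem_index_enum. Qed.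

Lemma G_cont n (Lam : 'I_n -> R) (P : Cn n -> Cn n) a :
  (forall x eps, 0 < eps -> exists delta, 0 < delta /\
     forall y, vnorm (vsub y x) < delta -> vnorm (vsub (P y) (P x)) < eps) ->
  forall t0 eps, 0 < eps -> exists d, 0 < d /\ forall t, Rabs (t - t0) < d -> vnorm (vsub (G Lam P a t) (G Lam P a t0)) < eps.
Proof.
move=> HPc t0 eps Heps.
set B := 1 + \big[Rplus/0]_(j < n) Rabs (Lam j).
have HB0 : 0 <= \big[Rplus/0]_(j < n) Rabs (Lam j) by apply sumS_ge0 => i; apply Rabs_pos.
have HB : 1 <= B by rewrite /B; lra.
set b0 := Phi (fun k => - (Lam k * t0)) a.
have [dP [HdP HP]] := HPc b0 (eps / 2) ltac:(lra).
have Ha := vnorm_ge0 a. have Hpb := vnorm_ge0 (P b0).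
set d := Rmin (dP / (B * (vnorm a + 1))) (eps / (2 * (B * (vnorm (P b0) + 1)))).
have Hd1 : 0 < dP / (B * (vnorm a + 1)) by apply Rdiv_lt_0_compat; nra.
have Hd2 : 0 < eps / (2 * (B * (vnorm (P b0) + 1))) by apply Rdiv_lt_0_compat; nra.
exists d; split. by apply Rmin_glb_lt.
move=> t Ht.
set e := B * Rabs (t - t0).
have He : 0 <= e by apply Rmult_le_pos; [lra|apply Rabs_pos].
have Hang : forall s, (s = 1 \/ s = -1) -> forall k, Rabs (s * (Lam k * (t - t0))) <= e.
  move=> s Hs k. rewrite Rabs_mult Rabs_mult. have -> : Rabs s = 1 by case: Hs => ->; rewrite ?Rabs_Ropp Rabs_R1.
  rewrite Rmult_1_l /e. apply Rmult_le_compat_r. apply Rabs_pos. have := Lam_bound Lam k. rewrite /B; lra.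
have He1 : e * vnorm a < dP.
  have : Rabs (t - t0) < dP / (B * (vnorm a + 1)) by apply: Rlt_le_trans Ht (Rmin_l _ _).
  move=> h. have : B * Rabs (t - t0) * (vnorm a + 1) < dP.
    have := Rmult_lt_compat_r (B * (vnorm a + 1)) _ _ ltac:(nra) h.
    rewrite (_ : dP / (B * (vnorm a + 1)) * (B * (vnorm a + 1)) = dP); last by field; nra. nra.
  rewrite /e. have := Rabs_pos (t - t0). nra.
have He2 : e * vnorm (P b0) < eps / 2.
  have : Rabs (t - t0) < eps / (2 * (B * (vnorm (P b0) + 1))) by apply: Rlt_le_trans Ht (Rmin_r _ _).
  move=> h. have : B * Rabs (t - t0) * (vnorm (P b0) + 1) < eps / 2.
    have := Rmult_lt_compat_r (B * (vnorm (P b0) + 1)) _ _ ltac:(nra) h.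
    rewrite (_ : eps / (2 * (B * (vnorm (P b0) + 1))) * (B * (vnorm (P b0) + 1)) = eps / 2); last by field; nra. nra.
  rewrite /e. have := Rabs_pos (t - t0). nra.
set bt := Phi (fun k => - (Lam k * t)) a.
have Ebt : bt = Phi (fun k => - 1 * (Lam k * (t - t0))) b0.
  rewrite /bt /b0 Phi_comp. congr (Phi _ a); apply functional_extensionality => k; ring.
have Hbt : vnorm (vsub bt b0) < dP.
  rewrite Ebt. apply: Rle_lt_trans (rot_close _ He _) _. move=> k; apply Hang; by right.
  by rewrite /b0 Phi_norm.
have E1 : Phi (fun k => Lam k * t) (P b0) = Phi (fun k => 1 * (Lam k * (t - t0))) (Phi (fun k => Lam k * t0) (P b0)).
  rewrite Phi_comp. congr (Phi _ _); apply functional_extensionality => k; ring.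
rewrite /G -/bt -/b0.
apply: Rle_lt_trans (vtri _ (Phi (fun k => Lam k * t) (P b0)) _) _.
rewrite Phi_sub E1.
have H1 := HP bt Hbt.
have H2 : vnorm (vsub (Phi (fun k => 1 * (Lam k * (t - t0))) (Phi (fun k => Lam k * t0) (P b0))) (Phi (fun k => Lam k * t0) (P b0))) <= e * vnorm (P b0).
  apply: Rle_trans (rot_close _ He _) _. move=> k; apply Hang; by left. by rewrite Phi_norm; lra.
lra.
Qed.

Lemma contR_plus f g : contR f -> contR g -> contR (fun t => f t + g t).
Proof. move=> Hf Hg t. apply: (continuous_plus f g); [apply Hf|apply Hg]. Qed.
Lemma contR_scal f c : contR f -> contR (fun t => c * f t).
Proof. move=> Hf t. apply: (continuous_mult (fun _ => c) f). apply continuous_const. apply Hf. Qed.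

Lemma RInt_sum (I : Type) (r : seq I) (f : I -> R -> R) a b : (forall i, contR (f i)) ->
  ex_RInt (fun t => \big[Rplus/0]_(i <- r) f i t) a b /\
  RInt (fun t => \big[Rplus/0]_(i <- r) f i t) a b = \big[Rplus/0]_(i <- r) RInt (f i) a b.
Proof.
move=> Hc. elim: r => [|i r [IH1 IH2]].
- have E : forall t, \big[Rplus/0]_(i <- [::]) f i t = 0 by move=> t; rewrite big_nil.
  split. apply: (ex_RInt_ext (fun _ => 0)). move=> x _; by rewrite E. apply exR => t; apply continuous_const.
  rewrite big_nil (RInt_ext _ (fun _ => 0)). rewrite RInt_const. change ((b - a) * 0 = 0). ring.
  move=> x _; by rewrite E.
- have E : forall t, \big[Rplus/0]_(j <- i :: r) f j t = f i t + \big[Rplus/0]_(j <- r) f j t by move=> t; rewrite big_cons.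
  split.
  + apply: (ex_RInt_ext (fun t => f i t + \big[Rplus/0]_(j <- r) f j t)). move=> x _; by rewrite E.
    apply: (ex_RInt_plus (f i)) => //. by apply exR.
  + rewrite big_cons (RInt_ext _ (fun t => f i t + \big[Rplus/0]_(j <- r) f j t)).
    rewrite -IH2. exact: (RInt_plus (f i) _ a b (exR a b (Hc i)) IH1).
    move=> x _; by rewrite E.
Qed.

Definition vint n (F : R -> Cn n) a b : Cn n :=
  fun j => (RInt (fun t => fst (F t j)) a b, RInt (fun t => snd (F t j)) a b).

Definition contV n (F : R -> Cn n) := forall j, contR (fun t => fst (F t j)) /\ contR (fun t => snd (F t j)).

Lemma VI n (F : R -> Cn n) a b K : a <= b -> contV F -> (forall t, vnorm (F t) <= K) ->
  vnorm (vint F a b) <= K * (b - a).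
Proof.
move=> Hab Hc HK.
have HK0 : 0 <= K by have := vnorm_ge0 (F a); have := HK a; lra.
set w := vint F a b.
set f := fun (j : 'I_n) t => fst (w j) * fst (F t j) + snd (w j) * snd (F t j).
have Hfc : forall j, contR (f j).
  move=> j. have [h1 h2] := Hc j. apply contR_plus; by apply contR_scal.
have [Hex HR] := @RInt_sum _ (index_enum 'I_n) f a b Hfc.
have Edot : forall t, dot w (F t) = \big[Rplus/0]_(j <- index_enum 'I_n) f j t by move=> t; apply sumS_ext.
have Hww : \big[Rplus/0]_(j <- index_enum 'I_n) RInt (f j) a b = dot w w.
  apply sumS_ext => j. have [h1 h2] := Hc j. rewrite /f.
  rewrite (RInt_plus (fun t => fst (w j) * fst (F t j)) (fun t => snd (w j) * snd (F t j)) a b).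
  change (RInt (fun t => fst (w j) * fst (F t j)) a b + RInt (fun t => snd (w j) * snd (F t j)) a b = fst (w j) * fst (w j) + snd (w j) * snd (w j)).
  rewrite (RInt_scal (fun t => fst (F t j)) a b (fst (w j))) ?(RInt_scal (fun t => snd (F t j)) a b (snd (w j))).
  done. by apply exR. by apply exR.
  by apply exR, contR_scal. by apply exR, contR_scal.
have Hle : dot w w <= (b - a) * (vnorm w * K).
  rewrite -Hww -HR.
  rewrite (_ : (b - a) * (vnorm w * K) = RInt (fun _ => vnorm w * K) a b); last by rewrite RInt_const.
  apply RInt_le => //. apply exR => t; apply continuous_const.
  move=> x _. rewrite -Edot. apply: Rle_trans (CS _ _) _. apply Rmult_le_compat_l. apply vnorm_ge0. apply HK.
rewrite -vnorm_sq in Hle. have h0 := vnorm_ge0 w.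
destruct (Rle_dec (vnorm w) (K * (b - a))) as [h|h] => //.
have h1 : 0 <= K * (b - a) by apply Rmult_le_pos; lra.
have : vnorm w * (K * (b - a)) < vnorm w * vnorm w by apply Rmult_lt_compat_l; lra.
lra.
Qed.

Lemma vint_sub n (F H : R -> Cn n) a b : contV F -> contV H ->
  vnorm (vsub (vint F a b) (vint H a b)) = vnorm (vint (fun t => vsub (F t) (H t)) a b).
Proof.
move=> HF HH. apply vnorm_ext => j. have [f1 f2] := HF j. have [h1 h2] := HH j. rewrite /vint /vsub /=.
split; by rewrite RInt_minusR.
Qed.

Lemma contV_sub n (F H : R -> Cn n) : contV F -> contV H -> contV (fun t => vsub (F t) (H t)).
Proof. move=> HF HH j. have [f1 f2] := HF j. have [h1 h2] := HH j. split; by apply contR_sub. Qed.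

Lemma div_lt x y c : 0 < y -> x < c * y -> x / y < c.
Proof. move=> Hy H. apply (Rmult_lt_reg_r y) => //. rewrite /Rdiv Rmult_assoc Rinv_l; lra. Qed.

Definition Pav n (Lam : 'I_n -> R) (P : Cn n -> Cn n) (a : Cn n) : Cn n :=
  fun j => (meanR (fun t => fst (G Lam P a t j)), meanR (fun t => snd (G Lam P a t j))).

Lemma G_norm n (Lam : 'I_n -> R) P a t : vnorm (G Lam P a t) = vnorm (P (Phi (fun k => - (Lam k * t)) a)).
Proof. by rewrite /G Phi_norm. Qed.

Lemma Conv n (Lam : 'I_n -> R) X (P : Cn n -> Cn n) : Xadm X -> LipX X P ->
  forall r, 0 <= r -> forall eps, 0 < eps ->
       exists T0, 0 < T0 /\
         forall T, T0 <= Rabs T -> forall a : Cn n, vnorm a <= r ->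
           vnorm (vsub (avgP Lam P T a) (Pav Lam P a)) < eps.
Proof.
move=> [HX0 _] [HPc HPr] r Hr eps Heps.
have [HPb HPl] := HPr (r + 1) ltac:(lra).
set K := X (r + 1). have HK : 0 <= K by apply HX0; lra.
have HB : forall u, vnorm u <= r -> vnorm (P u) <= K by move=> u hu; apply HPb; lra.
have HL : forall u v, vnorm u <= r -> vnorm v <= r -> vnorm (vsub (P u) (P v)) <= K * vnorm (vsub u v).
  move=> u v hu hv; apply HPl; lra.
have Hbd : forall a, vnorm a <= r -> forall j t, Rabs (fst (G Lam P a t j)) <= K /\ Rabs (snd (G Lam P a t j)) <= K.
  move=> a ha j t. have [h1 h2] := comp_le (G Lam P a t) j. rewrite G_norm in h1 h2.
  have := HB (Phi (fun k => - (Lam k * t)) a). rewrite Phi_norm => h. split; lra.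
have Hct : forall a j, contR (fun t => fst (G Lam P a t j)) /\ contR (fun t => snd (G Lam P a t j)).
  move=> a. apply cont_from_vec. by apply G_cont.
have HAP : forall eta, 0 < eta -> exists L, 0 <= L /\ forall a, vnorm a <= r -> forall j,
    APh (fun t => fst (G Lam P a t j)) L eta /\ APh (fun t => snd (G Lam P a t j)) L eta.
  move=> eta Heta. set e := eta / (K * (1 + r) + 1).
  have He : 0 < e by apply Rdiv_lt_0_compat; nra.
  have Hek : e * K + K * (e * r) <= eta.
    have -> : e * K + K * (e * r) = e * (K * (1 + r)) by ring.
    have : e * (K * (1 + r) + 1) = eta by rewrite /e; field; nra.
    nra.
  have [L [HL0 HLs]] := torusAP Lam He.
  exists L; split => // a ha j.
  have Hg : forall s, exists tau, Rabs (tau - s) <= L /\ forall t,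
      vnorm (vsub (G Lam P a (t + tau)) (G Lam P a t)) <= eta.
    move=> s. have [tau [Ht Hc]] := HLs s. exists tau; split => // t.
    have := G_AP HL HB HK (Rlt_le _ _ He) Hc ha t. lra.
  split => s; have [tau [Ht Hc]] := Hg s; exists tau; split => // t;
    have [h1 h2] := comp_le (vsub (G Lam P a (t + tau)) (G Lam P a t)) j; have h3 := Hc t;
    [exact (Rle_trans _ _ _ h1 h3) | exact (Rle_trans _ _ _ h2 h3)].
have Hcv : forall a, vnorm a <= r -> forall j,
   Un_cv (Un (fun t => fst (G Lam P a t j))) (meanR (fun t => fst (G Lam P a t j))) /\
   Un_cv (Un (fun t => snd (G Lam P a t j))) (meanR (fun t => snd (G Lam P a t j))).
  move=> a ha j. have [c1 c2] := Hct a j. split.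
  - apply: (S4 (M := K)) => //. move=> t; by case: (Hbd a ha j t).
    move=> eta Heta. have [L [HL0 HLa]] := HAP eta Heta. exists L; split => //. by case: (HLa a ha j).
  - apply: (S4 (M := K)) => //. move=> t; by case: (Hbd a ha j t).
    move=> eta Heta. have [L [HL0 HLa]] := HAP eta Heta. exists L; split => //. by case: (HLa a ha j).
set N1 := INR n + 1. have HN1 : 1 <= N1 by rewrite /N1; have := pos_INR n; lra.
set eta := eps / (8 * N1). have Heta : 0 < eta by apply Rdiv_lt_0_compat; lra.
have [L [HL0 HLa]] := HAP eta Heta.
set T0 := 32 * N1 * L * K / eps + 1.
have HT0a : 0 <= 32 * N1 * L * K / eps by apply Rmult_le_pos; [repeat apply Rmult_le_pos; lra|apply Rlt_le, Rinv_0_lt_compat; lra].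
exists T0; split. rewrite /T0; lra.
move=> T HT a ha.
have HTp : 0 < Rabs T by rewrite /T0 in HT; lra.
have HT0 : T <> 0 by move=> h; rewrite h Rabs_R0 in HTp; lra.
set c := 4 * L * K / Rabs T + 2 * eta.
have Hc1 : 4 * L * K / Rabs T < eta.
  apply div_lt => //.
  have : eta * T0 <= eta * Rabs T by apply Rmult_le_compat_l; lra.
  have : eta * T0 = 4 * L * K + eta by rewrite /T0 /eta; field; lra.
  lra.
have Hcomp : forall j, Rabs (fst (vsub (avgP Lam P T a) (Pav Lam P a) j)) <= c /\
                       Rabs (snd (vsub (avgP Lam P T a) (Pav Lam P a) j)) <= c.
  move=> j. rewrite /vsub avgP_G /Pav /=. have [c1 c2] := Hct a j. have [u1 u2] := Hcv a ha j.
  have [a1 a2] := HLa a ha j.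
  split; apply: (ST (M := K)) => //; try lra; move=> t; by case: (Hbd a ha j t).
apply: Rle_lt_trans (vnorm_le_sum _) _.
have HS : \big[Rplus/0]_(j < n) (Rabs (fst (vsub (avgP Lam P T a) (Pav Lam P a) j)) + Rabs (snd (vsub (avgP Lam P T a) (Pav Lam P a) j)))
   <= \big[Rplus/0]_(j < n) (2 * c).
  apply sumS_le => j. have [h1 h2] := Hcomp j. lra.
apply: Rle_lt_trans HS _.
rewrite sum_const.
have : INR n * (2 * c) < INR n * (2 * (3 * eta)) + eps / 4.
  have : INR n * (2 * c) <= INR n * (2 * (3 * eta)). apply Rmult_le_compat_l; [apply pos_INR | rewrite /c; lra].
  lra.
have : INR n * (2 * (3 * eta)) = 6 * INR n * eps / (8 * N1) by rewrite /eta; field; lra.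
have : 6 * INR n * eps / (8 * N1) <= 3 * eps / 4.
  apply le_div. lra. rewrite /N1. have := pos_INR n. nra.
lra.
Qed.

Lemma avg_comp n (Lam : 'I_n -> R) P T v : 0 < T -> contV (G Lam P v) -> forall j,
  fst (avgP Lam P T v j) = / T * fst (vint (G Lam P v) 0 T j) /\
  snd (avgP Lam P T v j) = / T * snd (vint (G Lam P v) 0 T j).
Proof.
move=> HT Hc j. have [c1 c2] := Hc j. rewrite avgP_G /avgR /vint /=.
case: (Rlt_dec 0 T) => h /=; last lra.
rewrite !Rint_RInt //; by apply exR.
Qed.

Unset Implicit Arguments.
Theorem lemma3p2 (n : nat) (Lam : 'I_n -> R) (X : R -> R) (P : Cn n -> Cn n) :
  (forall j, Lam j <> 0) -> Xadm X -> LipX X P ->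
  exists Pav : Cn n -> Cn n,
    LipX X Pav /\
    (forall r, 0 < r -> forall eps, 0 < eps ->
       exists T0, 0 < T0 /\
         forall T, T0 <= Rabs T -> forall a : Cn n, vnorm a <= r ->
           vnorm (vsub (avgP Lam P T a) (Pav a)) < eps).
Proof.
move=> _ HX HP.
have [HX0 _] := HX. have [HPc HPr] := HP.
have HcV : forall v, contV (G Lam P v) by move=> v j; apply cont_from_vec; apply G_cont.
have Hconv : forall r, 0 <= r -> forall eps, 0 < eps -> exists T, 0 < T /\ forall a, vnorm a <= r ->
    vnorm (vsub (avgP Lam P T a) (Pav Lam P a)) < eps.
  move=> r Hr eps Heps. have [T0 [HT0 H]] := Conv Lam HX HP Hr Heps.
  exists T0; split => // a ha. apply H => //. rewrite Rabs_right; lra.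
have Hab : forall R, 0 <= R -> forall v T, vnorm v < R -> 0 < T -> vnorm (avgP Lam P T v) <= X R.
  move=> R HR v T hv HT. have [HPb _] := HPr R HR.
  rewrite (vnorm_ext (v := fun j => (/ T * fst (vint (G Lam P v) 0 T j), / T * snd (vint (G Lam P v) 0 T j)))); last by apply avg_comp.
  rewrite vscal_norm Rabs_right; last by apply Rle_ge, Rlt_le, Rinv_0_lt_compat.
  have := VI (K := X R) (Rlt_le _ _ HT) (HcV v) _.
  move=> h. have := h (fun t => ltac:(rewrite G_norm; apply HPb; rewrite Phi_norm; exact hv)).
  move=> h2. apply: Rle_trans (Rmult_le_compat_l _ _ _ _ h2) _. apply Rlt_le, Rinv_0_lt_compat => //.
  right. field. lra.
have Hal : forall R, 0 <= R -> forall u v T, vnorm u < R -> vnorm v < R -> 0 < T ->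
    vnorm (vsub (avgP Lam P T u) (avgP Lam P T v)) <= X R * vnorm (vsub u v).
  move=> R HR u v T hu hv HT. have [_ HPl] := HPr R HR.
  rewrite (vnorm_ext (v := fun j => (/ T * fst (vsub (vint (G Lam P u) 0 T) (vint (G Lam P v) 0 T) j),
                                      / T * snd (vsub (vint (G Lam P u) 0 T) (vint (G Lam P v) 0 T) j)))); last first.
    move=> j. have [a1 a2] := avg_comp HT (HcV u) j. have [b1 b2] := avg_comp HT (HcV v) j.
    split.
    - change (fst (avgP Lam P T u j) - fst (avgP Lam P T v j) = / T * (fst (vint (G Lam P u) 0 T j) - fst (vint (G Lam P v) 0 T j))). rewrite a1 b1; ring.
    - change (snd (avgP Lam P T u j) - snd (avgP Lam P T v j) = / T * (snd (vint (G Lam P u) 0 T j) - snd (vint (G Lam P v) 0 T j))). rewrite a2 b2; ring.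
  rewrite vscal_norm Rabs_right; last by apply Rle_ge, Rlt_le, Rinv_0_lt_compat.
  rewrite vint_sub //.
  have Hg : forall t, vnorm (vsub (G Lam P u t) (G Lam P v t)) <= X R * vnorm (vsub u v).
    move=> t. rewrite /G Phi_sub. apply: Rle_trans (HPl _ _ _ _) _; try by rewrite Phi_norm.
    by rewrite Phi_sub; right.
  have h2 := VI (Rlt_le _ _ HT) (contV_sub (HcV u) (HcV v)) Hg.
  apply: Rle_trans (Rmult_le_compat_l _ _ _ _ h2) _. apply Rlt_le, Rinv_0_lt_compat => //.
  right. field. lra.
have Hbound : forall R, 0 <= R -> forall v, vnorm v < R -> vnorm (Pav Lam P v) <= X R.
  move=> R HR v hv. apply Rle_plus_epsilon => e He.
  have [T [HT H]] := Hconv (vnorm v) (vnorm_ge0 v) e He.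
  have h1 := H v (Rle_refl _). have h2 := Hab R HR v T hv HT.
  rewrite -(vsub0 (Pav Lam P v)). apply: Rle_trans (vtri _ (avgP Lam P T v) _) _.
  rewrite vsym vsub0. lra.
have Hlip : forall R, 0 <= R -> forall u v, vnorm u < R -> vnorm v < R ->
    vnorm (vsub (Pav Lam P u) (Pav Lam P v)) <= X R * vnorm (vsub u v).
  move=> R HR u v hu hv. apply Rle_plus_epsilon => e He.
  have Hm : 0 <= Rmax (vnorm u) (vnorm v) by apply: Rle_trans (vnorm_ge0 u) (Rmax_l _ _).
  have [T [HT H]] := Hconv _ Hm (e / 2) ltac:(lra).
  have h1 := H u (Rmax_l _ _). have h2 := H v (Rmax_r _ _).
  have h3 := Hal R HR u v T hu hv HT.
  apply: Rle_trans (vtri _ (avgP Lam P T u) _) _.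
  apply: Rle_trans (Rplus_le_compat_l _ _ _ (vtri _ (avgP Lam P T v) _)) _.
  rewrite (vsym (Pav Lam P u)). lra.
exists (Pav Lam P). split.
- split.
  + move=> x eps Heps. set R := vnorm x + 1.
    have HR : 0 <= R by rewrite /R; have := vnorm_ge0 x; lra.
    have HXR : 0 <= X R by apply HX0.
    set d := Rmin 1 (eps / (X R + 1)).
    have Hd2 : 0 < eps / (X R + 1) by apply Rdiv_lt_0_compat; lra.
    exists d; split. by apply Rmin_glb_lt; lra.
    move=> y hy.
    have hy1 : vnorm (vsub y x) < 1 by apply: Rlt_le_trans hy (Rmin_l _ _).
    have hy2 : vnorm (vsub y x) < eps / (X R + 1) by apply: Rlt_le_trans hy (Rmin_r _ _).
    have hyR : vnorm y < R.
      rewrite -(vsub0 y). apply: Rle_lt_trans (vtri _ x _) _. rewrite vsub0 /R. lra.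
    have hxR : vnorm x < R by rewrite /R; lra.
    apply: Rle_lt_trans (Hlip R HR y x hyR hxR) _.
    have : X R * vnorm (vsub y x) <= X R * (eps / (X R + 1)) by apply Rmult_le_compat_l; lra.
    have : X R * (eps / (X R + 1)) < eps.
      apply (Rmult_lt_reg_r (X R + 1)). lra.
      rewrite (_ : X R * (eps / (X R + 1)) * (X R + 1) = X R * eps); last by field; lra. nra.
    lra.
  + move=> R HR. split. by apply Hbound. by apply Hlip.
- move=> r Hr. apply: (Conv Lam HX HP). lra.
Qed.
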